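(* Let $N: M \to S^2$ be a non--trivial harmonic map. Then every $\mu$--Darboux transform of $N$ is given by a simple factor dressing, and vice versa. More precisely, if we denote by $d_\lambda$ the associated family of flat connections of $N$ and put $M_\mu =\varphi\mathbb{C}$ for a $d_\mu$--parallel section $\varphi\in\Gamma(\tilde M\times\mathbb{H})$, $\mu\in\mathbb{C}_*$, then the simple factor dressing $\hat N$ of $N$ with respect to $M_\mu$ is the $\mu$--Darboux transform of $N$ with respect to $\varphi$, that is \[ \hat N = T^{-1} N T \] with $T = \frac 12(N\varphi(a-1)\varphi^{-1} + \varphi b\varphi^{-1})$ and $a=\frac{\mu+\mu^{-1}}2, b = i\frac{\mu^{-1}-\mu}2$.
   Context: $M$ is a Riemann surface with complex structure $J_M$ and universal cover $\tilde M$; $*\omega(X)=\omega(J_MX)$ for 1--forms. $\mathbb{R}^4=\mathbb{H}$, $\mathbb{R}^3=\operatorname{Im}\mathbb{H}$, $S^2=\{n\in\operatorname{Im}\mathbb{H}\mid n^2=-1\}$. A map $N:M\to S^2$ is harmonic if $d*dN = N\,dN\wedge *dN$. Let $J$ be left multiplication by $N$ on the trivial bundle $M\times\mathbb{H}$, with Hopf field $A=\frac{J(dJ)+*dJ}{4}$. Identify $\mathbb{H}=\mathbb{C}\oplus j\mathbb{C}$ with $\mathbb{C}^2$ via the complex structure $I$ = right multiplication by $i$; complex numbers $z$ act as endomorphisms $\phi\mapsto\phi z$. Set $A^{(1,0)}=\frac12(A-I*A)$, $A^{(0,1)}=\frac12(A+I*A)$, and the associated family $d_\lambda = d + (\lambda-1)A^{(1,0)}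 + (\lambda^{-1}-1)A^{(0,1)}$, $\lambda\in\mathbb{C}_*$, which is flat for all $\lambda$ since $N$ is harmonic; $N$ is non--trivial if $d_\lambda\neq d$ (achievable for non-constant $N$ by replacing $N$ by $-N$). Simple factor dressing: for $\mu\in\mathbb{C}_*\setminus S^1$ and a $d_\mu$--parallel complex line subbundle $M_\mu$ of $\tilde M\times\mathbb{C}^2$, let $\pi_\mu,\pi_\mu^\perp$ be the projections onto $M_\mu$ and $M_\mu^\perp$ (with $M_\mu^\perp = M_\mu j$) for the splitting $\mathbb{C}^2=M_\mu\oplus M_\mu^\perp$, and $r_\lambda=\pi_\mu\circ\gamma_\lambda+\pi_\mu^\perp$ with $\gamma_\lambda=\frac{1-\bar\mu^{-1}}{1-\mu}\frac{\lambda-\mu}{\lambda-\bar\mu^{-1}}$. Then $\hat d_\lambda=r_\lambda\circ d_\lambda\circ r_\lambda^{-1}$ is the associated family of a harmonic map $\hat N:\tilde M\to S^2$ (the simple factor dressing), whose complex structure $\hat J$ is the quaternionic extension of $\hat J|_{\hat E}=I$ with $\hat E=r_\infty E$, $E$ the $+i$ eigenspace of $J$. For $\mu\in S^1$, $r_\lambda=\mathrm{id}$ and $\hat N=N$. $\mu$--Darboux transform: for $\mu\in\mathbb{C}_*$, $\mu\neq1$, and a $d_\mu$--parallel section $\varphi$, the map $T$ defined in the claim is nowhere vanishing and $\hat N=T^{-1}NT$ is harmonic; this is the $\mu$--Darboux transform of $N$ with respect to $\varphi$ (for $\mu\in S^1$ it equals $N$). *)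

(* Defs.v *)
From Stdlib Require Import Reals.
From Coquelicot Require Import Coquelicot.
Open Scope R_scope.

(* Quaternions H = R^4 with basis 1, i, j, k.                          *)
Record quat := Q { q0 : R; q1 : R; q2 : R; q3 : R }.

Definition qzero : quat := Q 0 0 0 0.
Definition qone  : quat := Q 1 0 0 0.
Definition qi    : quat := Q 0 1 0 0.
Definition qj    : quat := Q 0 0 1 0.

Definition qadd (p q : quat) : quat :=
  Q (q0 p + q0 q) (q1 p + q1 q) (q2 p + q2 q) (q3 p + q3 q).
Definition qopp (p : quat) : quat := Q (- q0 p) (- q1 p) (- q2 p) (- q3 p).
Definition qsub (p q : quat) : quat := qadd p (qopp q).
Definition qscal (r : R) (p : quat) : quat :=
  Q (r * q0 p) (r * q1 p) (r * q2 p) (r * q3 p).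
Definition qmul (p q : quat) : quat :=
  Q (q0 p * q0 q - q1 p * q1 q - q2 p * q2 q - q3 p * q3 q)
    (q0 p * q1 q + q1 p * q0 q + q2 p * q3 q - q3 p * q2 q)
    (q0 p * q2 q - q1 p * q3 q + q2 p * q0 q + q3 p * q1 q)
    (q0 p * q3 q + q1 p * q2 q - q2 p * q1 q + q3 p * q0 q).
Definition qnorm2 (p : quat) : R := q0 p ^ 2 + q1 p ^ 2 + q2 p ^ 2 + q3 p ^ 2.
Definition qconj (p : quat) : quat := Q (q0 p) (- q1 p) (- q2 p) (- q3 p).
(* quaternion inverse (only meaningful for p <> 0) *)
Definition qinv (p : quat) : quat := qscal (/ qnorm2 p) (qconj p).

Definition is_complex (z : quat) : Prop := q2 z = 0 /\ q3 z = 0.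
Definition cconj (z : quat) : quat := qconj z.

Definition in_S2 (n : quat) : Prop := q0 n = 0 /\ qmul n n = qopp qone.

(* Splitting H = C (+) jC of a quaternion q = z + j w :
   cpart q = z (in C), jpart q = j w (in jC). *)
Definition cpart (q : quat) : quat := Q (q0 q) (q1 q) 0 0.
Definition jpart (q : quat) : quat := Q 0 0 (q2 q) (q3 q).

(* Calculus on a coordinate chart U of the (universal cover of the)    *)
(* Riemann surface: U is an open subset of R^2 = C, z = x + i y, with  *)
(* complex structure J_M d/dx = d/dy, J_M d/dy = - d/dx.               *)
Definition pdx (f : R * R -> R) (p : R * R) : R :=
  Derive (fun t => f (t, snd p)) (fst p).
Definition pdy (f : R * R -> R) (p : R * R) : R :=
  Derive (fun t => f (fst p, t)) (snd p).

Fixpoint Ck (k : nat) (U : R * R -> Prop) (f : R * R -> R) : Prop :=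
  match k with
  | O => forall p, U p -> continuous f p
  | S k' =>
      (forall p, U p ->
         continuous f p /\
         ex_derive (fun t => f (t, snd p)) (fst p) /\
         ex_derive (fun t => f (fst p, t)) (snd p)) /\
      Ck k' U (pdx f) /\ Ck k' U (pdy f)
  end.

Definition smooth_on (U : R * R -> Prop) (f : R * R -> R) : Prop :=
  forall k, Ck k U f.

Definition qsmooth_on (U : R * R -> Prop) (F : R * R -> quat) : Prop :=
  smooth_on U (fun p => q0 (F p)) /\ smooth_on U (fun p => q1 (F p)) /\
  smooth_on U (fun p => q2 (F p)) /\ smooth_on U (fun p => q3 (F p)).

Definition qdx (F : R * R -> quat) (p : R * R) : quat :=
  Q (pdx (fun p => q0 (F p)) p) (pdx (fun p => q1 (F p)) p)
    (pdx (fun p => q2 (F p)) p) (pdx (fun p => q3 (F p)) p).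
Definition qdy (F : R * R -> quat) (p : R * R) : quat :=
  Q (pdy (fun p => q0 (F p)) p) (pdy (fun p => q1 (F p)) p)
    (pdy (fun p => q2 (F p)) p) (pdy (fun p => q3 (F p)) p).

(* H-valued 1-forms, given by their values on d/dx and d/dy *)
Record form1 := F1 { fx : R * R -> quat; fy : R * R -> quat }.

Definition dform (F : R * R -> quat) : form1 := F1 (qdx F) (qdy F).
(* Hodge star: ( *w)(X) = w(J_M X) *)
Definition star (w : form1) : form1 := F1 (fy w) (fun p => qopp (fx w p)).
(* exterior derivative of a 1-form, evaluated on (d/dx, d/dy) *)
Definition d1 (w : form1) (p : R * R) : quat := qsub (qdx (fy w) p) (qdy (fx w) p).
(* wedge product of H-valued 1-forms, evaluated on (d/dx, d/dy) *)
Definition wedge (a b : form1) (p : R * R) : quat :=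
  qsub (qmul (fx a p) (fy b p)) (qmul (fy a p) (fx b p)).

Definition harmonic_S2 (U : R * R -> Prop) (N : R * R -> quat) : Prop :=
  qsmooth_on U N /\ (forall p, U p -> in_S2 (N p)) /\
  (forall p, U p ->
     d1 (star (dform N)) p = qmul (N p) (wedge (dform N) (star (dform N)) p)).

(* Hopf field A = (J dJ + *dJ)/4, J = left multiplication by N.
   Values are quaternions acting by left multiplication. *)
Definition hopfA (N : R * R -> quat) : form1 :=
  F1 (fun p => qscal (/ 4) (qadd (qmul (N p) (fx (dform N) p)) (fx (star (dform N)) p)))
     (fun p => qscal (/ 4) (qadd (qmul (N p) (fy (dform N) p)) (fy (star (dform N)) p))).

(* A^(1,0) = 1/2 (A - I *A), A^(0,1) = 1/2 (A + I *A), I = right mult. by i,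
   applied to a vector v in H, on d/dx (x) and d/dy (y). *)
Definition A10x N p v :=
  qscal (/ 2) (qsub (qmul (fx (hopfA N) p) v) (qmul (qmul (fx (star (hopfA N)) p) v) qi)).
Definition A10y N p v :=
  qscal (/ 2) (qsub (qmul (fy (hopfA N) p) v) (qmul (qmul (fy (star (hopfA N)) p) v) qi)).
Definition A01x N p v :=
  qscal (/ 2) (qadd (qmul (fx (hopfA N) p) v) (qmul (qmul (fx (star (hopfA N)) p) v) qi)).
Definition A01y N p v :=
  qscal (/ 2) (qadd (qmul (fy (hopfA N) p) v) (qmul (qmul (fy (star (hopfA N)) p) v) qi)).

(* Associated family d_lam = d + (lam-1) A^(1,0) + (lam^-1 - 1) A^(0,1);
   complex numbers act by right multiplication. *)
Definition dlam (N : R * R -> quat) (lam : quat) (psi : R * R -> quat) : form1 :=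
  F1 (fun p => qadd (qdx psi p)
        (qadd (qmul (A10x N p (psi p)) (qsub lam qone))
              (qmul (A01x N p (psi p)) (qsub (qinv lam) qone))))
     (fun p => qadd (qdy psi p)
        (qadd (qmul (A10y N p (psi p)) (qsub lam qone))
              (qmul (A01y N p (psi p)) (qsub (qinv lam) qone)))).

Definition parallel_on (U : R * R -> Prop) (nabla : form1) : Prop :=
  forall p, U p -> fx nabla p = qzero /\ fy nabla p = qzero.

Definition nontrivial_on (U : R * R -> Prop) (N : R * R -> quat) : Prop :=
  exists lam psi, is_complex lam /\ lam <> qzero /\ qsmooth_on U psi /\
    ~ (forall p, U p -> fx (dlam N lam psi) p = fx (dform psi) p /\
                        fy (dlam N lam psi) p = fy (dform psi) p).

(* projections for H = M_mu (+) M_mu^perp, M_mu = phi C, M_mu^perp = M_mu j *)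
Definition pi_mu (phi v : quat) : quat := qmul phi (cpart (qmul (qinv phi) v)).
Definition pi_mu_perp (phi v : quat) : quat := qmul phi (jpart (qmul (qinv phi) v)).
Definition gamma_lam (mu lam : quat) : quat :=
  qmul (qmul (qsub qone (qinv (cconj mu))) (qinv (qsub qone mu)))
       (qmul (qsub lam mu) (qinv (qsub lam (qinv (cconj mu))))).
(* gamma_infty = lim_{lam -> infty} gamma_lam = (1 - conj(mu)^-1)/(1 - mu) *)
Definition gamma_inf (mu : quat) : quat :=
  qmul (qsub qone (qinv (cconj mu))) (qinv (qsub qone mu)).
Definition r_lam (mu lam phi v : quat) : quat :=
  qadd (qmul (pi_mu phi v) (gamma_lam mu lam)) (pi_mu_perp phi v).
Definition r_inf (mu phi v : quat) : quat :=
  qadd (qmul (pi_mu phi v) (gamma_inf mu)) (pi_mu_perp phi v).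

(* Nhat is the simple factor dressing of N w.r.t. M_mu = phi C:
   for mu in S^1, Nhat = N; otherwise Nhat : U -> S^2 and its complex
   structure Jhat (left mult. by Nhat) is I on Ehat = r_infty E,
   E = { v | N v = v i } the +i eigenspace of J. *)
Definition simple_factor_dressing (U : R * R -> Prop) (N phi : R * R -> quat)
    (mu : quat) (Nhat : R * R -> quat) : Prop :=
  forall p, U p ->
    (qnorm2 mu = 1 -> Nhat p = N p) /\
    (qnorm2 mu <> 1 ->
       in_S2 (Nhat p) /\
       forall e, qmul (N p) e = qmul e qi ->
         qmul (Nhat p) (r_inf mu (phi p) e) = qmul (r_inf mu (phi p) e) qi).

Definition dt_a (mu : quat) : quat := qscal (/ 2) (qadd mu (qinv mu)).
Definition dt_b (mu : quat) : quat := qmul qi (qscal (/ 2) (qsub (qinv mu) mu)).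
Definition darbouxT (N phi : R * R -> quat) (mu : quat) (p : R * R) : quat :=
  qscal (/ 2)
    (qadd (qmul (qmul (qmul (N p) (phi p)) (qsub (dt_a mu) qone)) (qinv (phi p)))
          (qmul (qmul (phi p) (dt_b mu)) (qinv (phi p)))).

Definition darboux_transform (N phi : R * R -> quat) (mu : quat) (p : R * R) : quat :=
  qmul (qmul (qinv (darbouxT N phi mu p)) (N p)) (darbouxT N phi mu p).

(* Main.v *)
Require Import Defs.
From Stdlib Require Import Reals Lra.
From Coquelicot Require Import Coquelicot.
Open Scope R_scope.
Ltac qd := repeat match goal with q : quat |- _ => destruct q end.
Ltac qe := qd; unfold qmul, qadd, qscal, qopp, qsub, qconj, qone, qi, qzero, cpart, jpart in *; simpl in *; f_equal; ring.
Ltac qu0 := unfold qmul, qadd, qscal, qopp, qsub, qconj, qone, qi, qzero, cpart, jpart, qinv, qnorm2, dt_a, dt_b, gamma_inf, cconj in *; simpl in *.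
Ltac qu := qu0; qu0.

Lemma qmul_assoc p q r : qmul p (qmul q r) = qmul (qmul p q) r. Proof. qe. Qed.
Lemma qmul_addl p q r : qmul (qadd p q) r = qadd (qmul p r) (qmul q r). Proof. qe. Qed.
Lemma qmul_addr p q r : qmul r (qadd p q) = qadd (qmul r p) (qmul r q). Proof. qe. Qed.
Lemma qmul_scall a p q : qmul (qscal a p) q = qscal a (qmul p q). Proof. qe. Qed.
Lemma qmul_scalr a p q : qmul p (qscal a q) = qscal a (qmul p q). Proof. qe. Qed.
Lemma qmul_1l p : qmul qone p = p. Proof. qe. Qed.
Lemma qmul_1r p : qmul p qone = p. Proof. qe. Qed.
Lemma qmul_0l p : qmul qzero p = qzero. Proof. qe. Qed.
Lemma qmul_0r p : qmul p qzero = qzero. Proof. qe. Qed.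
Lemma qmul_oppl p q : qmul (qopp p) q = qopp (qmul p q). Proof. qe. Qed.
Lemma qmul_oppr p q : qmul p (qopp q) = qopp (qmul p q). Proof. qe. Qed.

Lemma qnorm2_pos p : p <> qzero -> qnorm2 p <> 0.
Proof.
  destruct p as [a b c d]; unfold qnorm2, qzero; simpl; intros H E.
  apply H. assert (a = 0 /\ b = 0 /\ c = 0 /\ d = 0) as (->&->&->&->) by (repeat split; nra). reflexivity.
Qed.
Lemma qinv_l p : p <> qzero -> qmul (qinv p) p = qone.
Proof. intro H; generalize (qnorm2_pos p H); destruct p; unfold qinv, qnorm2, qmul, qscal, qconj, qone; simpl; intro; f_equal; field; contradict H0; lra. Qed.
Lemma qinv_r p : p <> qzero -> qmul p (qinv p) = qone.
Proof. intro H; generalize (qnorm2_pos p H); destruct p; unfold qinv, qnorm2, qmul, qscal, qconj, qone; simpl; intro; f_equal; field; contradict H0; lra. Qed.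
Lemma cancel_l p X : p <> qzero -> qmul (qmul X (qinv p)) p = X.
Proof. intro H. rewrite <- qmul_assoc, qinv_l, qmul_1r; auto. Qed.
Lemma cancel_r p X : p <> qzero -> qmul (qmul X p) (qinv p) = X.
Proof. intro H. rewrite <- qmul_assoc, qinv_r, qmul_1r; auto. Qed.
Lemma qscal_half0 X : qscal (/2) X = qzero -> X = qzero.
Proof. destruct X; unfold qscal, qzero; simpl; intro E; injection E; intros; f_equal; lra. Qed.
Lemma q0_conj X p : q0 X = 0 -> q0 (qmul (qmul (qinv p) X) p) = 0.
Proof. destruct X, p; simpl; intros ->; qu. ring. Qed.
Lemma S2norm n : q0 n = 0 -> qmul n n = qopp qone -> q1 n * q1 n + q2 n * q2 n + q3 n * q3 n = 1.
Proof. destruct n; simpl; intros ->; unfold qmul, qopp, qone; simpl; intro E; injection E; intros; lra. Qed.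
Lemma core (n y s b g : quat) : q0 n = 0 -> is_complex s -> is_complex b -> is_complex g ->
  qmul (qadd s (qmul qi b)) g = qadd (qconj s) (qmul qi (qconj b)) ->
  qmul n y = qmul y qi ->
  qmul (qadd (qopp s) (qmul n b)) (qadd (qmul (cpart y) g) (jpart y)) =
  qmul (qmul (qadd (qmul n s) b) (qadd (qmul (cpart y) g) (jpart y))) qi.
Proof.
  destruct n as [n0 n1 n2 n3], y as [y0 y1 y2 y3], s as [s0 s1 s2 s3], b as [b0 b1 b2 b3], g as [g0 g1 g2 g3].
  unfold is_complex; simpl; intros -> [-> ->] [-> ->] [-> ->] HR HE.
  unfold qmul, qadd, qscal, qopp, qsub, qconj, qone, qi, qzero, cpart, jpart in *; simpl in *.
  injection HR; injection HE; clear HR HE; intros E3 E2 E1 E0 _ _ R1 R0.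
  pose proof (f_equal (Rmult s0) E0).
  pose proof (f_equal (Rmult s1) E0).
  pose proof (f_equal (Rmult b0) E0).
  pose proof (f_equal (Rmult b1) E0).
  pose proof (f_equal (Rmult s0) E1).
  pose proof (f_equal (Rmult s1) E1).
  pose proof (f_equal (Rmult b0) E1).
  pose proof (f_equal (Rmult b1) E1).
  pose proof (f_equal (Rmult s0) E2).
  pose proof (f_equal (Rmult s1) E2).
  pose proof (f_equal (Rmult b0) E2).
  pose proof (f_equal (Rmult b1) E2).
  pose proof (f_equal (Rmult s0) E3).
  pose proof (f_equal (Rmult s1) E3).
  pose proof (f_equal (Rmult b0) E3).
  pose proof (f_equal (Rmult b1) E3).
  pose proof (f_equal (Rmult (y0)) R0).
  pose proof (f_equal (Rmult (y1)) R0).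
  pose proof (f_equal (Rmult (y2)) R0).
  pose proof (f_equal (Rmult (y3)) R0).
  pose proof (f_equal (Rmult (n1*y0)) R0).
  pose proof (f_equal (Rmult (n1*y1)) R0).
  pose proof (f_equal (Rmult (n1*y2)) R0).
  pose proof (f_equal (Rmult (n1*y3)) R0).
  pose proof (f_equal (Rmult (n2*y0)) R0).
  pose proof (f_equal (Rmult (n2*y1)) R0).
  pose proof (f_equal (Rmult (n2*y2)) R0).
  pose proof (f_equal (Rmult (n2*y3)) R0).
  pose proof (f_equal (Rmult (n3*y0)) R0).
  pose proof (f_equal (Rmult (n3*y1)) R0).
  pose proof (f_equal (Rmult (n3*y2)) R0).
  pose proof (f_equal (Rmult (n3*y3)) R0).
  pose proof (f_equal (Rmult (y0)) R1).
  pose proof (f_equal (Rmult (y1)) R1).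
  pose proof (f_equal (Rmult (y2)) R1).
  pose proof (f_equal (Rmult (y3)) R1).
  pose proof (f_equal (Rmult (n1*y0)) R1).
  pose proof (f_equal (Rmult (n1*y1)) R1).
  pose proof (f_equal (Rmult (n1*y2)) R1).
  pose proof (f_equal (Rmult (n1*y3)) R1).
  pose proof (f_equal (Rmult (n2*y0)) R1).
  pose proof (f_equal (Rmult (n2*y1)) R1).
  pose proof (f_equal (Rmult (n2*y2)) R1).
  pose proof (f_equal (Rmult (n2*y3)) R1).
  pose proof (f_equal (Rmult (n3*y0)) R1).
  pose proof (f_equal (Rmult (n3*y1)) R1).
  pose proof (f_equal (Rmult (n3*y2)) R1).
  pose proof (f_equal (Rmult (n3*y3)) R1).
  f_equal; lra.
Qed.
Lemma sq0 a b : a*a+b*b = 0 -> a = 0 /\ b = 0.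
Proof. intro E. assert (a*a = 0) by nra. assert (b*b=0) by nra. split; nra. Qed.

Lemma rel (mu : quat) : is_complex mu -> mu <> qzero -> mu <> qone ->
  qmul (qadd (qsub (dt_a mu) qone) (qmul qi (dt_b mu))) (gamma_inf mu)
  = qadd (qconj (qsub (dt_a mu) qone)) (qmul qi (qconj (dt_b mu))).
Proof.
  destruct mu as [m0 m1 m2 m3]; unfold is_complex; simpl; intros [-> ->] H0 H1.
  assert (k : m0*m0+m1*m1 <> 0).
  { intro E. apply H0. apply sq0 in E as [-> ->]. reflexivity. }
  assert (k2 : (1-m0)*(1-m0)+m1*m1 <> 0).
  { intro E. apply H1. apply sq0 in E as [E ->]. replace m0 with 1 by lra. reflexivity. }
  qu. f_equal; field; repeat split; try (contradict k; nra); try (contradict k2; nra).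
Qed.
Lemma nz_core (n mu : quat) : q0 n = 0 -> q1 n * q1 n + q2 n * q2 n + q3 n * q3 n = 1 ->
  is_complex mu -> mu <> qzero -> mu <> qone ->
  qadd (qmul n (qsub (dt_a mu) qone)) (dt_b mu) <> qzero.
Proof.
  destruct n as [n0 n1 n2 n3], mu as [m0 m1 m2 m3]; unfold is_complex; simpl; intros -> Hn [-> ->] H0 H1.
  assert (k : m0*m0+m1*m1 <> 0).
  { intro E. apply H0. apply sq0 in E as [-> ->]. reflexivity. }
  assert (ku : / (m0*m0+m1*m1) * (m0*m0+m1*m1) = 1) by (field; exact k).
  qu. assert (Ek : m0 * (m0 * 1) + m1 * (m1 * 1) + 0 * (0 * 1) + 0 * (0 * 1) = m0*m0+m1*m1) by ring. rewrite Ek.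
  set (u := / (m0*m0+m1*m1)) in *.
  set (s0 := / 2 * (m0 + u * m0) + - (1)).
  set (s1 := / 2 * (m1 + u * - m1) + - 0).
  intro E. injection E; clear E. intros E3 E2 E1 E0.
  assert (P1 : (m0-1)*(m0-1)+m1*m1 = (1+n1)*(1+n1)*(s0*s0+s1*s1)).
  { assert (m0 - 1 = (1+n1)*s0) by (unfold s0 in *; nra). assert (m1 = (1+n1)*s1) by (unfold s1 in *; nra). nra. }
  assert (P2 : (u*m0-1)*(u*m0-1)+(u*m1)*(u*m1) = (1-n1)*(1-n1)*(s0*s0+s1*s1)).
  { assert (Ha: u*m0 - 1 = (1-n1)*s0) by (unfold s0 in *; nra). assert (Hb: u*m1 = -(1-n1)*s1) by (unfold s1 in *; nra). rewrite Ha, Hb; ring. }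
  assert (P3 : (n2*n2+n3*n3)*(s0*s0+s1*s1) = 0).
  { replace ((n2*n2+n3*n3)*(s0*s0+s1*s1)) with ((n2*s0+n3*s1)*(n2*s0+n3*s1) + (n3*s0-n2*s1)*(n3*s0-n2*s1)) by ring.
    replace (n2*s0+n3*s1) with 0 by lra. replace (n3*s0-n2*s1) with 0 by lra. ring. }
  assert (P4 : ((m0-1)*(m0-1)+m1*m1) * ((u*m0-1)*(u*m0-1)+(u*m1)*(u*m1)) = 0).
  { rewrite P1, P2. replace (n2*n2+n3*n3) with ((1+n1)*(1-n1)) in P3 by lra.
    replace ((1 + n1) * (1 + n1) * (s0 * s0 + s1 * s1) * ((1 - n1) * (1 - n1) * (s0 * s0 + s1 * s1)))
      with (((1 + n1) * (1 - n1) * (s0 * s0 + s1 * s1)) * ((1 + n1) * (1 - n1) * (s0 * s0 + s1 * s1))) by ring.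
    rewrite P3; ring. }
  apply Rmult_integral in P4 as [P4|P4].
  - apply sq0 in P4 as [Ea Eb]. apply H1. replace m0 with 1 by lra. rewrite Eb. reflexivity.
  - apply sq0 in P4 as [Ea Eb].
    assert (u <> 0) by (intro; rewrite H in ku; lra).
    assert (m1 = 0) by (apply Rmult_integral in Eb as [?|?]; [contradiction|assumption]).
    subst m1. assert (m0 <> 0) by (intro; apply k; subst; ring).
    unfold u in Ea. replace (m0*m0+0*0) with (m0*m0) in Ea by ring.
    assert (Hi : / (m0*m0) * m0 = / m0) by (field; auto).
    rewrite Hi in Ea. assert (m0 = 1).
    { rewrite <- (Rinv_inv m0). replace (/ m0) with 1 by lra. apply Rinv_1. }
    apply H1; subst; reflexivity.
Qed.

Lemma sandwich p X Y : p <> qzero ->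
  qmul (qmul (qmul (qinv p) X) p) (qmul (qmul (qinv p) Y) p) = qmul (qmul (qinv p) (qmul X Y)) p.
Proof. intro H. rewrite !qmul_assoc, cancel_r by auto. rewrite <- (qmul_assoc (qinv p) X Y). reflexivity. Qed.
Lemma unsandwich p Y : p <> qzero -> qmul (qmul p Y) (qinv p) = qzero -> Y = qzero.
Proof.
  intros H E. assert (E2 : qmul (qmul (qinv p) (qmul (qmul p Y) (qinv p))) p = Y)
    by (rewrite !qmul_assoc, qinv_l, qmul_1l, cancel_l by auto; reflexivity).
  rewrite E, qmul_0r, qmul_0l in E2. auto.
Qed.
Definition Tq (N0 ph mu : quat) : quat :=
  qscal (/ 2)
    (qadd (qmul (qmul (qmul N0 ph) (qsub (dt_a mu) qone)) (qinv ph))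
          (qmul (qmul ph (dt_b mu)) (qinv ph))).

Lemma cplx_dt (mu : quat) : is_complex mu -> is_complex (qsub (dt_a mu) qone) /\ is_complex (dt_b mu) /\ is_complex (gamma_inf mu).
Proof. destruct mu; unfold is_complex; simpl; intros [-> ->]; qu; repeat split; ring. Qed.

Lemma pt (N0 ph mu : quat) : in_S2 N0 -> ph <> qzero -> is_complex mu -> mu <> qzero -> mu <> qone ->
  Tq N0 ph mu <> qzero /\
  (forall e, qmul N0 e = qmul e qi ->
     qmul N0 (qmul (Tq N0 ph mu) (r_inf mu ph e)) = qmul (qmul (Tq N0 ph mu) (r_inf mu ph e)) qi).
Proof.
  intros [HN0 HNN] Hph Hmu Hmu0 Hmu1.
  destruct (cplx_dt mu Hmu) as (Cs & Cb & Cg).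
  set (s := qsub (dt_a mu) qone) in *. set (b := dt_b mu) in *.
  set (n := qmul (qmul (qinv ph) N0) ph).
  assert (Hn0 : q0 n = 0) by (apply q0_conj; auto).
  assert (Nph : qmul N0 ph = qmul ph n).
  { unfold n. rewrite !qmul_assoc, qinv_r, qmul_1l; auto. }
  assert (Hnn : qmul n n = qopp qone).
  { unfold n. rewrite sandwich, HNN, qmul_oppr, qmul_1r, qmul_oppl, qinv_l by auto. reflexivity. }
  assert (Tf : Tq N0 ph mu = qscal (/2) (qmul (qmul ph (qadd (qmul n s) b)) (qinv ph))).
  { unfold Tq. fold s b. f_equal. rewrite qmul_addr, qmul_addl, Nph, !qmul_assoc. reflexivity. }
  split.
  - rewrite Tf. intro HT. apply qscal_half0 in HT.
    apply (nz_core n mu Hn0 (S2norm n Hn0 Hnn) Hmu Hmu0 Hmu1). fold s b.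
    exact (unsandwich ph _ Hph HT).
  - intros e He.
    set (y := qmul (qinv ph) e).
    assert (Hy : qmul n y = qmul y qi).
    { unfold n, y. rewrite !qmul_assoc, cancel_r by auto.
      rewrite <- (qmul_assoc (qinv ph) N0 e), He, qmul_assoc. reflexivity. }
    set (g := gamma_inf mu) in *.
    set (w := qadd (qmul (cpart y) g) (jpart y)).
    assert (Hr : r_inf mu ph e = qmul ph w).
    { unfold r_inf, pi_mu, pi_mu_perp, w. fold y. fold g. rewrite qmul_addr, qmul_assoc. reflexivity. }
    set (X := qadd (qmul n s) b).
    assert (HTr : qmul (Tq N0 ph mu) (r_inf mu ph e) = qscal (/2) (qmul ph (qmul X w))).
    { rewrite Tf, Hr, qmul_scall. fold X. f_equal. rewrite !qmul_assoc, cancel_l by auto. reflexivity. }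
    assert (Hc := core n y s b g Hn0 Cs Cb Cg (rel mu Hmu Hmu0 Hmu1) Hy).
    fold w in Hc.
    assert (HnX : qmul n (qmul X w) = qmul (qadd (qopp s) (qmul n b)) w).
    { unfold X. rewrite qmul_assoc, qmul_addr, qmul_assoc, Hnn, qmul_oppl, qmul_1l. reflexivity. }
    rewrite HTr, qmul_scalr, qmul_scall. f_equal.
    rewrite qmul_assoc, Nph, <- qmul_assoc, HnX, Hc. rewrite !qmul_assoc. reflexivity.
Qed.

Lemma real_r x s : q1 s = 0 -> q2 s = 0 -> q3 s = 0 -> qmul x s = qscal (q0 s) x.
Proof. destruct x, s; simpl; intros -> -> ->; unfold qmul, qscal; simpl; f_equal; ring. Qed.
Lemma real_l x s : q1 s = 0 -> q2 s = 0 -> q3 s = 0 -> qmul s x = qscal (q0 s) x.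
Proof. destruct x, s; simpl; intros -> -> ->; unfold qmul, qscal; simpl; f_equal; ring. Qed.

Lemma unit_case (N0 ph mu : quat) : ph <> qzero -> is_complex mu -> qnorm2 mu = 1 ->
  Tq N0 ph mu <> qzero ->
  qmul (qmul (qinv (Tq N0 ph mu)) N0) (Tq N0 ph mu) = N0.
Proof.
  intros Hph Hmu Hk HT.
  assert (Hs : q1 (qsub (dt_a mu) qone) = 0 /\ q2 (qsub (dt_a mu) qone) = 0 /\ q3 (qsub (dt_a mu) qone) = 0 /\
               q1 (dt_b mu) = 0 /\ q2 (dt_b mu) = 0 /\ q3 (dt_b mu) = 0).
  { unfold dt_a, dt_b, qinv. rewrite Hk, Rinv_1. destruct mu as [m0 m1 m2 m3]; unfold is_complex in Hmu; simpl in Hmu.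
    destruct Hmu as [-> ->]. qu. repeat split; ring. }
  destruct Hs as (s1 & s2 & s3 & b1 & b2 & b3).
  assert (Tf : Tq N0 ph mu = qscal (/2) (qadd (qscal (q0 (qsub (dt_a mu) qone)) N0) (qscal (q0 (dt_b mu)) qone))).
  { unfold Tq. f_equal. rewrite (real_r (qmul N0 ph)), (real_r ph (dt_b mu)) by auto.
    rewrite !qmul_scall, cancel_r, qinv_r by auto. reflexivity. }
  assert (Hc : qmul N0 (Tq N0 ph mu) = qmul (Tq N0 ph mu) N0) by (rewrite Tf; qe).
  rewrite <- qmul_assoc, Hc, qmul_assoc, qinv_l, qmul_1l by auto. reflexivity.
Qed.

Lemma D_S2 (N0 T : quat) : in_S2 N0 -> T <> qzero -> in_S2 (qmul (qmul (qinv T) N0) T).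
Proof.
  intros [H0 H1] HT. split.
  - apply q0_conj; auto.
  - rewrite sandwich, H1, qmul_oppr, qmul_1r, qmul_oppl, qinv_l by auto. reflexivity.
Qed.

Lemma eig_ex N0 : in_S2 N0 -> exists e, e <> qzero /\ qmul N0 e = qmul e qi.
Proof.
  intros [H0 H1]. assert (Hn := S2norm N0 H0 H1).
  destruct N0 as [n0 n1 n2 n3]; simpl in *; subst n0.
  destruct (Req_dec n1 (-1)) as [E|E].
  - subst n1. assert (n2 = 0 /\ n3 = 0) as [-> ->] by (apply sq0; lra).
    exists qj. split.
    + unfold qj, qzero; intro X; injection X; lra.
    + unfold qmul, qj, qi; simpl; f_equal; ring.
  - exists (Q (1+n1) 0 (-n3) n2). split.
    + unfold qzero; intro X; injection X; intros; lra.
    + unfold qmul, qi; simpl; f_equal; nra.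
Qed.

Lemma mul_nz_r p q : q <> qzero -> qmul p q = qzero -> p = qzero.
Proof. intros Hq E. rewrite <- (cancel_r q p Hq), E, qmul_0l. reflexivity. Qed.
Lemma inv_nz q : q <> qzero -> qinv q <> qzero.
Proof. intros Hq E. assert (X := qinv_r q Hq). rewrite E, qmul_0r in X. unfold qzero, qone in X; injection X; lra. Qed.

Lemma g_nz mu : is_complex mu -> mu <> qzero -> mu <> qone -> gamma_inf mu <> qzero.
Proof.
  intros Hmu H0 H1 E. unfold gamma_inf in E.
  assert (H1' : qsub qone mu <> qzero).
  { intro X. apply H1. destruct mu; unfold qsub, qadd, qopp, qone, qzero in *; simpl in *; injection X; intros.
    f_equal; lra. }
  apply mul_nz_r in E; [|apply inv_nz; auto].
  assert (Hc : qconj mu = qone).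
  { assert (Hc0 : qconj mu <> qzero).
    { intro X; apply H0. destruct mu; unfold qconj, qzero in *; simpl in *; injection X; intros; f_equal; lra. }
    assert (Hi : qinv (cconj mu) = qone).
    { destruct (qinv (cconj mu)); unfold qsub, qadd, qopp, qone, qzero in *; simpl in *; injection E; intros; f_equal; lra. }
    assert (X := qinv_r (qconj mu) Hc0). unfold cconj in Hi. rewrite Hi, qmul_1r in X. exact X. }
  apply H1. destruct mu; unfold qconj, qone in *; simpl in *; injection Hc; intros; f_equal; lra.
Qed.

Lemma r_nz (ph mu e : quat) : ph <> qzero -> is_complex mu -> mu <> qzero -> mu <> qone -> e <> qzero ->
  r_inf mu ph e <> qzero.
Proof.
  intros Hph Hmu H0 H1 He E.
  set (y := qmul (qinv ph) e).
  assert (Hr : r_inf mu ph e = qmul ph (qadd (qmul (cpart y) (gamma_inf mu)) (jpart y))).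
  { unfold r_inf, pi_mu, pi_mu_perp. fold y. rewrite qmul_addr, qmul_assoc. reflexivity. }
  rewrite Hr in E.
  assert (Ew : qadd (qmul (cpart y) (gamma_inf mu)) (jpart y) = qzero).
  { rewrite <- (qmul_1l (qadd _ _)), <- (qinv_l ph Hph), <- qmul_assoc, E, qmul_0r. reflexivity. }
  assert (Gz := g_nz mu Hmu H0 H1). destruct (cplx_dt mu Hmu) as (_ & _ & [Cg2 Cg3]).
  assert (Hy : y = qzero).
  { destruct y as [y0 y1 y2 y3], (gamma_inf mu) as [g0 g1 g2 g3]; simpl in *; subst g2 g3.
    unfold qmul, qadd, cpart, jpart, qzero in Ew; simpl in Ew; injection Ew; intros E3 E2 E1 E0.
    assert (Hg : g0*g0+g1*g1 <> 0) by (intro X; apply sq0 in X as [-> ->]; apply Gz; reflexivity).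
    assert (Hyy : (y0*y0+y1*y1)*(g0*g0+g1*g1) = 0).
    { replace ((y0*y0+y1*y1)*(g0*g0+g1*g1)) with ((y0*g0-y1*g1)*(y0*g0-y1*g1)+(y0*g1+y1*g0)*(y0*g1+y1*g0)) by ring.
      nra. }
    apply Rmult_integral in Hyy as [Hyy|Hyy]; [|contradiction].
    apply sq0 in Hyy as [-> ->]. unfold qzero; f_equal; lra. }
  apply He. unfold y in Hy. rewrite <- (qmul_1l e), <- (qinv_r ph Hph), <- qmul_assoc, Hy, qmul_0r. reflexivity.
Qed.

Lemma D_eig (N0 ph mu e : quat) : in_S2 N0 -> ph <> qzero -> is_complex mu -> mu <> qzero -> mu <> qone ->
  qmul N0 e = qmul e qi ->
  qmul (qmul (qmul (qinv (Tq N0 ph mu)) N0) (Tq N0 ph mu)) (r_inf mu ph e) = qmul (r_inf mu ph e) qi.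
Proof.
  intros HN Hph Hmu H0 H1 He. destruct (pt N0 ph mu HN Hph Hmu H0 H1) as [HT Hpt].
  rewrite <- !qmul_assoc, (Hpt e He), !qmul_assoc, qinv_l, qmul_1l by auto. reflexivity.
Qed.

Lemma uniq_eig (A B r : quat) : r <> qzero -> qmul A r = qmul r qi -> qmul B r = qmul r qi -> A = B.
Proof. intros Hr HA HB. rewrite <- (cancel_r r A Hr), <- (cancel_r r B Hr), HA, HB. reflexivity. Qed.

Theorem theorem6p1
  (U : R * R -> Prop) (N phi : R * R -> quat) (mu : quat) :
  open U ->
  harmonic_S2 U N ->
  nontrivial_on U N ->
  is_complex mu -> mu <> qzero -> mu <> qone ->
  qsmooth_on U phi ->
  (forall p, U p -> phi p <> qzero) ->
  parallel_on U (dlam N mu phi) ->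
  (forall p, U p -> darbouxT N phi mu p <> qzero) /\
  (exists Nhat, simple_factor_dressing U N phi mu Nhat) /\
  (forall Nhat, simple_factor_dressing U N phi mu Nhat ->
     forall p, U p -> Nhat p = darboux_transform N phi mu p).
Proof.
  intros _ [_ [HS2 _]] _ Hmu H0 H1 _ Hph _.
  assert (HT : forall p, U p -> darbouxT N phi mu p <> qzero).
  { intros p Up. exact (proj1 (pt (N p) (phi p) mu (HS2 p Up) (Hph p Up) Hmu H0 H1)). }
  split; [exact HT|]. split.
  - exists (darboux_transform N phi mu). intros p Up. split.
    + intro Hk. apply unit_case; auto. apply HT; auto.
    + intro Hk. refine (conj _ _).
      * apply D_S2; auto; apply HT; auto.
      * intros e He. apply D_eig; auto.
  - intros Nhat Hs p Up. destruct (Hs p Up) as [A B].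
    destruct (Req_dec (qnorm2 mu) 1) as [Hk|Hk].
    + rewrite A by auto. symmetry. apply unit_case; auto. apply HT; auto.
    + destruct (B Hk) as [_ Hn]. destruct (eig_ex (N p) (HS2 p Up)) as [e [Hne He]].
      apply (uniq_eig _ _ (r_inf mu (phi p) e)).
      * apply r_nz; auto.
      * apply Hn; auto.
      * apply D_eig; auto.
Qed.
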